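(* The L\'evy measure $Q$ of a time-stable process is supported by the set $\{f\in\mathbb{R}^{[0,\infty)}\setminus\{0\}:\ f(0)=0\}$, i.e. $Q(\{f:\ f(0)\neq0\})=0$.
   Context: For a process $\eta$ on $[0,\infty)$ and $a>0$, $(a\circ\eta)(t)=\eta(at)$. A stochastically continuous real-valued process $\xi(t)$, $t\geq0$, is time-stable if for each integer $n\geq2$, $\xi_1+\cdots+\xi_n$ and $n\circ\xi$ have the same finite-dimensional distributions, where $\xi_1,\dots,\xi_n$ are i.i.d. copies of $\xi$. L\'evy measure: an infinitely divisible stochastically continuous process $\xi$ (its Gaussian part, if any, removed) admits a representation in which there is a deterministic function $c$ on $[0,\infty)$ and a $\sigma$-finite measure $Q$ on $\mathbb{R}^{[0,\infty)}\setminus\{0\}$ (cylindrical $\sigma$-algebra, completed with respect to $Q$) with $\int\min(1,f(t)^2)Q(df)<\infty$ for all $t\geq0$, such that for all $k\geq1$, $t_1,\dots,t_k\geq0$, $\theta_1,\dots,\theta_k\in\mathbb{R}$, $$\mathbb{E}e^{\mathrm{i}\sum_j\theta_j\xi(t_j)}=\exp\Big\{\mathrm{i}\sum_j\theta_jc(t_j)+\int\Big[e^{\mathrm{i}\sum_j\theta_jf(t_j)}-1-\mathrm{i}\sum_j\theta_jL(f(t_j))\Big]Q(df)\Big\},$$ where $L(u)=u$ for $|u|\le1$, $L(u)=1$ for $u>1$, $L(u)=-1$ for $u<-1$. (Equivalently $\xi(t)$ equals in law $c(t)$ plus the compensated sum of the values at $t$ of the points of a Poisson process on $\mathbb{R}^{[0,\infty)}\setminus\{0\}$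 with intensity $Q$.) The representation can be chosen minimal: the $\sigma$-algebra generated by the sets $\{f:f(t)\in A\}$, $t\ge0$, $A$ Borel, coincides with the cylindrical $\sigma$-algebra up to $Q$-null sets, and there is no measurable $B$ with $Q(B)>0$ such that $Q(\{f\in B: f(t)\neq0\})=0$ for every $t\geq0$. The minimal representation is unique up to isomorphism; its $Q$ is called the L\'evy measure of $\xi$. *)

(* Defs.v *)
From HB Require Import structures.
From mathcomp Require Import all_boot all_order all_algebra.
From mathcomp Require Import all_classical all_reals all_analysis.
Set Implicit Arguments. Unset Strict Implicit. Unset Printing Implicit Defensive.
Import Order.TTheory GRing.Theory Num.Theory.
Import numFieldNormedType.Exports.
Local Open Scope classical_set_scope.
Local Open Scope ring_scope.

Definition time (R : realType) := {x : R | 0 <= x}.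

Definition time0 (R : realType) : time R := exist _ 0 (lexx (0 : R)).

Definition tscale (R : realType) (n : nat) (t : time R) : time R :=
  exist _ (n%:R * sval t) (mulr_ge0 (ler0n R n) (svalP t)).

Definition npath (R : realType) := {f : time R -> R | f <> (fun _ => 0)}.

Lemma npath_ne0 (R : realType) : (fun _ : time R => (1 : R)) <> (fun _ => 0).
Proof. by move=> /(congr1 (fun g => g (time0 R)))/eqP; rewrite oner_eq0. Qed.

HB.instance Definition _ (R : realType) := gen_eqMixin (npath R).
HB.instance Definition _ (R : realType) := gen_choiceMixin (npath R).
HB.instance Definition _ (R : realType) :=
  isPointed.Build (npath R) (exist _ (fun=> 1) (@npath_ne0 R)).

Definition cyl (R : realType) : set (set (npath R)) :=
  [set S | exists (t : time R) (A : set R),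
      measurable A /\ S = [set f : npath R | A (sval f t)]].

Definition pathSpace (R : realType) := g_sigma_algebraType (@cyl R).

Definition Ltrunc (R : realType) (u : R) : R :=
  if `|u| <= 1 then u else if 1 < u then 1 else -1.

Section process_defs.
Context {R : realType}.

(* Equality of finite-dimensional distributions (on measurable rectangles,
   which form a pi-system generating the Borel sets of R^k). *)
Definition same_fdd {d} {O : measurableType d} (P : probability O R)
  (X : time R -> O -> R)
  {d'} {O' : measurableType d'} (P' : probability O' R) (Y : time R -> O' -> R) :=
  forall (k : nat) (ts : 'I_k -> time R) (A : 'I_k -> set R),
    (forall j, measurable (A j)) ->
    P [set w | forall j, A j (X (ts j) w)] = P' [set w | forall j, A j (Y (ts j) w)].

Definition is_process {d} {O : measurableType d} (X : time R -> O -> R) :=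
  forall t, measurable_fun setT (X t).

Definition iid_copies {d} {O : measurableType d} (P : probability O R)
  (X : time R -> O -> R)
  {d'} {O' : measurableType d'} (P' : probability O' R) (n : nat)
  (xs : 'I_n -> time R -> O' -> R) :=
  (forall i, is_process (xs i)) /\
  (forall i, same_fdd P' (xs i) P X) /\
  (forall (k : nat) (ts : 'I_k -> time R) (A : 'I_n -> 'I_k -> set R),
    (forall i j, measurable (A i j)) ->
    fine (P' [set w | forall i j, A i j (xs i (ts j) w)]) =
      \prod_(i < n) fine (P' [set w | forall j, A i j (xs i (ts j) w)])).

Definition time_stable {d} {O : measurableType d} (P : probability O R)
  (X : time R -> O -> R) :=
  forall n : nat, (2 <= n)%N ->
    exists (d' : measure_display) (O' : measurableType d')
           (P' : probability O' R) (xs : 'I_n -> time R -> O' -> R),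
      iid_copies P X P' xs /\
      same_fdd P' (fun t w => \sum_(i < n) xs i t w) P (fun t => X (tscale n t)).

Definition stoch_continuous {d} {O : measurableType d} (P : probability O R)
  (X : time R -> O -> R) :=
  forall (t : time R) (e eta : R), 0 < e -> 0 < eta ->
    exists2 delta : R, 0 < delta &
      forall s : time R, `|sval s - sval t| < delta ->
        (P [set w | (e < `|X s w - X t w|)%R] < eta%:E)%E.

(* (c, Sig, Q) is a Levy-Khintchine representation of X: c deterministic
   shift, Sig the covariance of the Gaussian part, Q the Levy measure on
   R^[0,oo) \ {0}; the characteristic functions are written out via their
   real and imaginary parts (cos / sin). *)
Definition levy_rep {d} {O : measurableType d} (P : probability O R)
  (X : time R -> O -> R) (c : time R -> R) (Sig : time R -> time R -> R)
  (Q : {measure set (pathSpace R) -> \bar R}) :=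
  (forall s t, Sig s t = Sig t s) /\
  (forall (k : nat) (ts : 'I_k -> time R) (th : 'I_k -> R),
     0 <= \sum_(j < k) \sum_(l < k) th j * th l * Sig (ts j) (ts l)) /\
  (forall t : time R,
     (\int[Q]_(f in [set: pathSpace R]) (Num.min 1 (sval f t ^+ 2))%:E < +oo)%E) /\
  (forall (k : nat) (ts : 'I_k -> time R) (th : 'I_k -> R),
    let S := fun w => \sum_(j < k) th j * X (ts j) w in
    let g := fun f : pathSpace R => \sum_(j < k) th j * sval f (ts j) in
    let h := fun f : pathSpace R => \sum_(j < k) th j * Ltrunc (sval f (ts j)) in
    let a := - (\sum_(j < k) \sum_(l < k) th j * th l * Sig (ts j) (ts l)) / 2
             + Rintegral Q setT (fun f => cos (g f) - 1) in
    let b := \sum_(j < k) th j * c (ts j)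
             + Rintegral Q setT (fun f => sin (g f) - h f) in
    (\int[P]_w (cos (S w))%:E = (expR a * cos b)%:E)%E /\
    (\int[P]_w (sin (S w))%:E = (expR a * sin b)%:E)%E).

Definition levy_minimal (Q : {measure set (pathSpace R) -> \bar R}) :=
  forall B : set (pathSpace R), measurable B ->
    (forall t : time R, Q (B `&` [set f | sval f t <> 0]) = 0%E) -> Q B = 0%E.

End process_defs.

(* Main.v *)
Require Import Defs.
From HB Require Import structures.
From mathcomp Require Import all_boot all_order all_algebra.
From mathcomp Require Import all_classical all_reals all_analysis.
From mathcomp Require Import measurable_realfun.
From mathcomp Require Import ring lra.
Import Order.TTheory GRing.Theory Num.Theory.
Import numFieldNormedType.Exports.
Local Open Scope classical_set_scope.
Local Open Scope ring_scope.
Section RintP.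
Context {R : realType} {d} {T : measurableType d} (mu : probability T R).

Lemma bounded_int (f : T -> R) (M : R) : measurable_fun setT f ->
  (forall x, `|f x| <= M) -> mu.-integrable setT (EFin \o f).
Proof.
move=> mf fb; apply: measurable_bounded_integrable => //.
  by apply: (le_lt_trans (probability_le1 mu measurableT)); rewrite ltry.
exists M; split; first by apply: ger0_real; exact: le_trans (normr_ge0 _) (fb point).
by move=> M' M1 x _; exact: le_trans (fb x) (ltW M1).
Qed.

Lemma RintE (f : T -> R) (M : R) : measurable_fun setT f ->
  (forall x, `|f x| <= M) -> (\int[mu]_x (f x)%:E = (\int[mu]_x f x)%:E)%E.
Proof.
move=> mf fb; rewrite /Rintegral fineK//.
by apply: integrable_fin_num => //; exact: bounded_int fb.
Qed.

Lemma Rint_distr d' (T' : measurableType d') (X : {mfun T >-> T'}) (f : T' -> R) (M : R) :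
  measurable_fun setT f -> (forall x, `|f x| <= M) ->
  \int[distribution mu X]_x f x = \int[mu]_w f (X w).
Proof.
move=> mf fb; rewrite /Rintegral; congr fine.
rewrite /distribution integral_pushforward//=.
- exact/measurable_EFinP.
- rewrite preimage_setT; apply: (bounded_int _ _ _ (fun w => fb (X w))); exact: measurableT_comp.
Qed.
End RintP.

Lemma mcos {R : realType} : measurable_fun setT (@cos R).
Proof. apply: continuous_measurable_fun; exact: continuous_cos. Qed.
Lemma msin {R : realType} : measurable_fun setT (@sin R).
Proof. apply: continuous_measurable_fun; exact: continuous_sin. Qed.
Section indep.
Context {R : realType} {d} {O : measurableType d} (P : probability O R)
  (X1 X2 : O -> R) (mX1 : measurable_fun setT X1) (mX2 : measurable_fun setT X2).
Hypothesis ind : forall A B : set R, measurable A -> measurable B ->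
  P (X1 @^-1` A `&` X2 @^-1` B) = (P (X1 @^-1` A) * P (X2 @^-1` B))%E.

Let X1' : {mfun O >-> R} := mfun_Sub (mem_set mX1).
Let X2' : {mfun O >-> R} := mfun_Sub (mem_set mX2).
Let mZ : measurable_fun setT (fun w => (X1 w, X2 w)) := measurable_fun_pair mX1 mX2.
Let Z' : {mfun O >-> (R * R)%type} := mfun_Sub (mem_set mZ).
Let mu1 := distribution P X1'.
Let mu2 := distribution P X2'.
Let mu := distribution P Z'.

Let muE A : measurable A -> (mu1 \x mu2)%E A = mu A.
Proof.
apply: product_measure_unique => A1 B1 mA mB.
by rewrite /mu /mu1 /mu2 /distribution /pushforward /= -ind.
Qed.

Lemma indep_cos th :
  \int[P]_w cos (th * (X1 w + X2 w)) =
  \int[P]_w cos (th * X1 w) * \int[P]_w cos (th * X2 w)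
  - \int[P]_w sin (th * X1 w) * \int[P]_w sin (th * X2 w).
Proof.
pose g := fun z : R * R => cos (th * z.1 + th * z.2).
have mg : measurable_fun setT g.
  apply: measurableT_comp; first exact: mcos.
  by apply: measurable_funD; apply: measurable_funM.
have gb z : `|g z| <= 1 by exact: cos_max.
have -> : \int[P]_w cos (th * (X1 w + X2 w)) = \int[mu]_z g z.
  rewrite (@Rint_distr _ _ _ P _ _ Z' g 1 mg gb); apply: eq_Rintegral => w _.
  by rewrite /g /= mulrDr.
have -> : \int[mu]_z g z = \int[(mu1 \x mu2)%E]_z g z.
  by rewrite /Rintegral; congr fine; apply: eq_measure_integral => A mA _; exact/esym/muE.
have mcs (a : R) : measurable_fun setT (fun y : R => cos (a + th * y)).
  apply: measurableT_comp; first exact: mcos.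
  by apply: measurable_funD => //; apply: measurable_funM.
have mC : measurable_fun setT (fun y : R => cos (th * y)).
  by apply: measurableT_comp; [exact: mcos| apply: measurable_funM].
have mS : measurable_fun setT (fun y : R => sin (th * y)).
  by apply: measurableT_comp; [exact: msin| apply: measurable_funM].
have bC y : `|cos (th * y)| <= 1 by exact: cos_max.
have bS y : `|sin (th * y)| <= 1 by exact: sin_max.
pose C2 := \int[mu2]_y cos (th * y).
pose S2 := \int[mu2]_y sin (th * y).
have intg : (mu1 \x mu2)%E.-integrable setT (EFin \o g).
  apply: measurable_bounded_integrable => //.
    apply: (@le_lt_trans _ _ (mu setT)).
      by rewrite le_eqVlt; apply/orP; left; apply/eqP; exact: muE.
    apply: (le_lt_trans (probability_le1 mu measurableT)).
    by rewrite ltry.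
  exists 1; split => // M M1 x _; exact: le_trans (gb x) (ltW M1).
have inner x : fubini_F mu2 (EFin \o g) x = (cos (th * x) * C2 - sin (th * x) * S2)%:E.
  rewrite /fubini_F /= (RintE mu2 _ _ (mcs (th * x)) (fun y => cos_max _)).
  congr EFin.
  under eq_Rintegral do rewrite cosD.
  rewrite RintegralB //; last 2 first.
  - apply: (bounded_int mu2 _ 1); first by apply: measurable_funM.
    by move=> y; rewrite normrM mulr_ile1 // ?cos_max.
  - apply: (bounded_int mu2 _ 1); first by apply: measurable_funM.
    by move=> y; rewrite normrM mulr_ile1 // ?sin_max.
  by rewrite !RintegralZl //; apply: (bounded_int mu2 _ 1).
have -> : \int[(mu1 \x mu2)%E]_z g z =
    \int[mu1]_x (cos (th * x) * C2 - sin (th * x) * S2).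
  rewrite /Rintegral; congr fine.
  transitivity (\int[mu1]_x fubini_F mu2 (EFin \o g) x)%E.
    exact: esym (integral12_prod_meas1 intg).
  by apply: eq_integral => x _; exact: inner.
rewrite RintegralB //; last 2 first.
- apply: (bounded_int mu1 _ `|C2|); first by apply: measurable_funM.
  by move=> y; rewrite normrM ler_piMl // ?cos_max.
- apply: (bounded_int mu1 _ `|S2|); first by apply: measurable_funM.
  by move=> y; rewrite normrM ler_piMl // ?sin_max.
rewrite !RintegralZr //; try by apply: (bounded_int _ _ 1).
rewrite /C2 /S2 /mu1 /mu2.
rewrite (@Rint_distr _ _ _ P _ _ X1' _ 1 mC bC) (@Rint_distr _ _ _ P _ _ X2' _ 1 mC bC).
rewrite (@Rint_distr _ _ _ P _ _ X1' _ 1 mS bS) (@Rint_distr _ _ _ P _ _ X2' _ 1 mS bS).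
by [].
Qed.
Lemma indep_sin th :
  \int[P]_w sin (th * (X1 w + X2 w)) =
  \int[P]_w sin (th * X1 w) * \int[P]_w cos (th * X2 w)
  + \int[P]_w cos (th * X1 w) * \int[P]_w sin (th * X2 w).
Proof.
pose g := fun z : R * R => sin (th * z.1 + th * z.2).
have mg : measurable_fun setT g.
  apply: measurableT_comp; first exact: msin.
  by apply: measurable_funD; apply: measurable_funM.
have gb z : `|g z| <= 1 by exact: sin_max.
have -> : \int[P]_w sin (th * (X1 w + X2 w)) = \int[mu]_z g z.
  rewrite (@Rint_distr _ _ _ P _ _ Z' g 1 mg gb); apply: eq_Rintegral => w _.
  by rewrite /g /= mulrDr.
have -> : \int[mu]_z g z = \int[(mu1 \x mu2)%E]_z g z.
  by rewrite /Rintegral; congr fine; apply: eq_measure_integral => A mA _; exact/esym/muE.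
have mcs (a : R) : measurable_fun setT (fun y : R => sin (a + th * y)).
  apply: measurableT_comp; first exact: msin.
  by apply: measurable_funD => //; apply: measurable_funM.
have mC : measurable_fun setT (fun y : R => cos (th * y)).
  by apply: measurableT_comp; [exact: mcos| apply: measurable_funM].
have mS : measurable_fun setT (fun y : R => sin (th * y)).
  by apply: measurableT_comp; [exact: msin| apply: measurable_funM].
have bC y : `|cos (th * y)| <= 1 by exact: cos_max.
have bS y : `|sin (th * y)| <= 1 by exact: sin_max.
pose C2 := \int[mu2]_y cos (th * y).
pose S2 := \int[mu2]_y sin (th * y).
have intg : (mu1 \x mu2)%E.-integrable setT (EFin \o g).
  apply: measurable_bounded_integrable => //.
    apply: (@le_lt_trans _ _ (mu setT)).
      by rewrite le_eqVlt; apply/orP; left; apply/eqP; exact: muE.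
    apply: (le_lt_trans (probability_le1 mu measurableT)).
    by rewrite ltry.
  exists 1; split => // M M1 x _; exact: le_trans (gb x) (ltW M1).
have inner x : fubini_F mu2 (EFin \o g) x = (sin (th * x) * C2 + cos (th * x) * S2)%:E.
  rewrite /fubini_F /= (RintE mu2 _ _ (mcs (th * x)) (fun y => sin_max _)).
  congr EFin.
  under eq_Rintegral do rewrite sinD.
  rewrite RintegralD //; last 2 first.
  - apply: (bounded_int mu2 _ 1); first by apply: measurable_funM.
    by move=> y; rewrite normrM mulr_ile1 // ?cos_max ?sin_max.
  - apply: (bounded_int mu2 _ 1); first by apply: measurable_funM.
    by move=> y; rewrite normrM mulr_ile1 // ?sin_max ?cos_max.
  by rewrite !RintegralZl //; apply: (bounded_int mu2 _ 1).
have -> : \int[(mu1 \x mu2)%E]_z g z =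
    \int[mu1]_x (sin (th * x) * C2 + cos (th * x) * S2).
  rewrite /Rintegral; congr fine.
  transitivity (\int[mu1]_x fubini_F mu2 (EFin \o g) x)%E.
    exact: esym (integral12_prod_meas1 intg).
  by apply: eq_integral => x _; exact: inner.
rewrite RintegralD //; last 2 first.
- apply: (bounded_int mu1 _ `|C2|); first by apply: measurable_funM.
  by move=> y; rewrite normrM ler_piMl // ?sin_max.
- apply: (bounded_int mu1 _ `|S2|); first by apply: measurable_funM.
  by move=> y; rewrite normrM ler_piMl // ?cos_max.
rewrite !RintegralZr //; try by apply: (bounded_int _ _ 1).
rewrite /C2 /S2 /mu1 /mu2.
rewrite (@Rint_distr _ _ _ P _ _ X1' _ 1 mC bC) (@Rint_distr _ _ _ P _ _ X2' _ 1 mC bC).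
rewrite (@Rint_distr _ _ _ P _ _ X1' _ 1 mS bS) (@Rint_distr _ _ _ P _ _ X2' _ 1 mS bS).
by [].
Qed.
End indep.
Section trig.
Context {R : realType}.

Lemma one_sub_cos (y : R) : 1 - cos y = 2 * sin (y / 2) ^+ 2.
Proof.
have e : y = (y / 2) *+ 2 by rewrite -mulr_natr divfK // pnatr_eq0.
rewrite {1}e cos_mulr2n cos2sin2; ring.
Qed.

Lemma abs_sin_le (z : R) : `|sin z| <= `|z|.
Proof.
have key (b : R) : 0 <= b -> `|sin b| <= b.
  move=> b0.
  have [c _ ] := @MVT_segment R sin cos 0 b b0 (fun x _ => is_derive_sin x)
    (continuous_subspaceT (@continuous_sin R)).
  rewrite sin0 subr0 subr0 => ->.
  by rewrite normrM (ger0_norm b0) ler_piMl // cos_max.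
have [z0|z0] := leP 0 z; first by rewrite (ger0_norm z0); exact: key.
rewrite (ltr0_norm z0) -normrN -sinN; apply: key; by rewrite oppr_ge0 ltW.
Qed.

Lemma one_sub_cos_le (y : R) : 1 - cos y <= y ^+ 2 / 2.
Proof.
rewrite one_sub_cos.
have : sin (y / 2) ^+ 2 <= (y / 2) ^+ 2.
  by rewrite -real_normK ?num_real // -[(y/2)^+2]real_normK ?num_real // lerXn2r ?nnegrE // abs_sin_le.
move=> h; apply: le_trans (ler_wpM2l _ h) _ => //.
by rewrite -subr_ge0 (_ : _ - _ = 0) //; field.
Qed.

Lemma cos_lt1 (y : R) : y != 0 -> `|y| < 4 -> cos y < 1.
Proof.
move=> y0 y4.
rewrite -cos_norm -subr_gt0 one_sub_cos.
apply: mulr_gt0 => //; apply: exprn_gt0; apply: sin2_gt0.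
rewrite divr_gt0 ?normr_gt0 //=.
by rewrite ltr_pdivrMr // (lt_le_trans y4) // -subr_ge0 (_ : _ - _ = 0) //; ring.
Qed.
End trig.
Lemma meval {R : realType} (t : time R) :
  measurable_fun setT (fun f : pathSpace R => sval f t).
Proof.
move=> _ A mA; rewrite setTI; apply: sub_sigma_algebra.
by exists t, A; split.
Qed.
Lemma Q_lemma {R : realType} (Q : {measure set (pathSpace R) -> \bar R}) (t : time R) :
  (\int[Q]_(f in [set: pathSpace R]) (Num.min 1 (sval f t ^+ 2))%:E < +oo)%E ->
  (forall m : nat, \int[Q]_f (cos ((m.+1%:R)^-1 * sval f t) - 1) = 0) ->
  Q [set f : pathSpace R | sval f t <> 0] = 0%E.
Proof.
move=> Qfin Qcos.
set e := fun f : pathSpace R => sval f t.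
have me : measurable_fun setT e := meval t.
pose th (m : nat) : R := (m.+1%:R)^-1.
have th0 m : 0 < th m by rewrite invr_gt0.
have th1 m : th m <= 1.
  by rewrite /th invf_le1 // ler1n.
pose g m f := (1 - cos (th m * e f))%:E.
have mg m : measurable_fun setT (g m).
  apply/measurable_EFinP; apply: measurable_funB => //.
  apply: measurableT_comp; first exact: mcos.
  by apply: measurable_funM.
have g0 m f : (0 <= g m f)%E by rewrite lee_fin subr_ge0 cos_le1.
have gle m f : (g m f <= (2 * Num.min 1 (e f ^+ 2))%:E)%E.
  rewrite lee_fin; have [h|h] := leP 1 (e f ^+ 2).
    by have := cos_geN1 (th m * e f); lra.
  have h1 := one_sub_cos_le (th m * e f).
  have h2 : (th m * e f) ^+ 2 <= e f ^+ 2.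
    by rewrite exprMn ler_piMl ?sqr_ge0 // expr_le1 // ltW.
  have h3 := sqr_ge0 (e f).
  lra.
have mmin : measurable_fun setT (fun f => (2 * Num.min 1 (e f ^+ 2))%:E).
  apply/measurable_EFinP; apply: measurable_funM => //.
  by apply: measurable_minr => //; apply: measurable_funX.
have intg m : (\int[Q]_f g m f = 0)%E.
  have fin : (\int[Q]_f g m f < +oo)%E.
    apply: (le_lt_trans (ge0_le_integral Q measurableT (fun f _ => g0 m f) (mg m) mmin (fun f _ => gle m f))).
    under eq_integral do rewrite EFinM.
    rewrite (ge0_integralZl_EFin Q measurableT) //; first by rewrite lte_mul_pinfty.
    - by move=> f _; rewrite lee_fin le_min ler01 sqr_ge0.
    - by apply/measurable_EFinP; apply: measurable_minr => //; apply: measurable_funX.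
  have h : fine (\int[Q]_f (cos (th m * e f) - 1)%:E) = 0 := Qcos m.
  have E : (\int[Q]_f (cos (th m * e f) - 1)%:E = - \int[Q]_f g m f)%E.
    rewrite -(integral_ge0N Q); last by move=> f _; exact: g0.
    by apply: eq_integral => f _; rewrite /g -EFinN opprB.
  rewrite E in h.
  have I0 : (0 <= \int[Q]_f g m f)%E by apply: integral_ge0 => f _; exact: g0.
  rewrite -(fineK (x := \int[Q]_f g m f)); last by rewrite ge0_fin_numE.
  by move: h; rewrite fineN => /eqP; rewrite oppr_eq0 => /eqP ->.
have ng m : Q.-negligible (~` [set f | setT f -> g m f = 0%E]).
  apply: (ae_eq_integral_abs Q measurableT (mg m)).1.
  rewrite -(intg m); apply: eq_integral => f _; exact: gee0_abs.
have [A [mA QA0 sub]] := negligible_bigcup ng.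
have mE : measurable [set f : pathSpace R | sval f t <> 0].
  have -> : [set f : pathSpace R | sval f t <> 0] = e @^-1` (~` [set 0%R]) by [].
  rewrite -[X in measurable X]setTI; apply: me => //; exact: measurableC.
apply/eqP; rewrite eq_le measure_ge0 andbT -QA0; apply: le_measure; rewrite ?inE //.
move=> f /= ef0; apply: sub; exists (Num.truncn `|e f|) => //= /(_ I).
rewrite /g => /eqP; rewrite eqe subr_eq0 => /eqP/esym/eqP; apply/negP.
rewrite lt_eqF // cos_lt1 //.
  by rewrite mulf_neq0 ?invr_eq0 ?pnatr_eq0 //; exact/eqP.
rewrite normrM ger0_norm ?(ltW (th0 _)) // (@lt_le_trans _ _ 1) //; last first.
  by rewrite ler1n.
by rewrite /th mulrC ltr_pdivrMr // mul1r; exact: truncnS_gt.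
Qed.
Lemma Rint_law {R : realType} {d1} {O1 : measurableType d1} (P1 : probability O1 R)
  {d2} {O2 : measurableType d2} (P2 : probability O2 R)
  (X1 : O1 -> R) (X2 : O2 -> R)
  (m1 : measurable_fun setT X1) (m2 : measurable_fun setT X2)
  (h : forall A, measurable A -> P1 (X1 @^-1` A) = P2 (X2 @^-1` A))
  (f : R -> R) (M : R) (mf : measurable_fun setT f) (fb : forall x, `|f x| <= M) :
  \int[P1]_w f (X1 w) = \int[P2]_w f (X2 w).
Proof.
pose X1' : {mfun O1 >-> R} := mfun_Sub (mem_set m1).
pose X2' : {mfun O2 >-> R} := mfun_Sub (mem_set m2).
transitivity (\int[distribution P1 X1']_x f x).
  by rewrite (@Rint_distr _ _ _ P1 _ _ X1' f M mf fb).
transitivity (\int[distribution P2 X2']_x f x); last first.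
  by rewrite (@Rint_distr _ _ _ P2 _ _ X2' f M mf fb).
rewrite /Rintegral; congr fine; apply: eq_measure_integral => A mA _.
exact: h A mA.
Qed.

Lemma setI1 {T : Type} (p : T -> Prop) : [set w | forall j : 'I_1, p w] = [set w | p w].
Proof. by apply/seteqP; split => w /=; [move/(_ ord0)|move=> h j]. Qed.

Lemma tscale0 {R : realType} n : tscale n (time0 R) = time0 R.
Proof. by apply: eq_exist; rewrite /= mulr0. Qed.

Lemma prob_fin {R : realType} {d} {O : measurableType d} (P : probability O R) A :
  measurable A -> P A = (fine (P A))%:E.
Proof.
move=> mA; rewrite fineK // ge0_fin_numE ?measure_ge0 //.
exact: le_lt_trans (probability_le1 P mA) (ltry _).
Qed.

Lemma sum2 {R : realType} (f : 'I_2 -> R) : \sum_(i < 2) f i = f ord0 + f ord_max.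
Proof. by rewrite big_ord_recl big_ord1; congr (_ + f _); apply: val_inj. Qed.

Lemma prod2 {R : realType} (f : 'I_2 -> R) : \prod_(i < 2) f i = f ord0 * f ord_max.
Proof. by rewrite big_ord_recl big_ord1; congr (_ * f _); apply: val_inj. Qed.
Lemma alg {R : realType} (C S A B : R) :
  C = C * C - S * S -> S = S * C + C * S ->
  C = expR A * cos B -> S = expR A * sin B -> A <= 0 -> A = 0.
Proof.
move=> eC eS hC hS A0.
have eA := expR_gt0 A.
have hS0 : S = 0.
  have [//|Sn0] := eqVneq S 0.
  have C2 : C = 1 / 2.
    have : S * (1 - 2 * C) = 0.
      have -> : S * (1 - 2 * C) = S - (S * C + C * S) by ring.
      by rewrite -eS subrr.
    move/eqP; rewrite mulf_eq0 => /orP[Sz|/eqP h]; [by rewrite Sz in Sn0|lra].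
  move: eC; rewrite C2 => h.
  have : S * S = - (1 / 4) by lra.
  have := sqr_ge0 S; rewrite expr2; lra.
have C1 : C = 1.
  have : C * (C - 1) = 0.
    have -> : C * (C - 1) = (C * C - S * S) - C + S * S by ring.
    by rewrite -eC hS0 subrr add0r mul0r.
  move/eqP; rewrite mulf_eq0 => /orP[/eqP C0|/eqP h]; last by lra.
  exfalso.
  have c0 : cos B = 0.
    by move: C0; rewrite hC => /eqP; rewrite mulf_eq0 gt_eqF //= => /eqP.
  have s0 : sin B = 0.
    by move: hS0; rewrite hS => /eqP; rewrite mulf_eq0 gt_eqF //= => /eqP.
  by have := cos2Dsin2 B; rewrite c0 s0 expr0n /= addr0 => /eqP; rewrite eq_sym oner_eq0.
have := cos_le1 B => cB.
have e1 : 1 <= expR A.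
  rewrite C1 in hC; rewrite hC.
  by rewrite ler_piMr // ltW.
apply/eqP; rewrite eq_le A0 /=; rewrite leNgt -expR_lt1; apply/negP; lra.
Qed.

Lemma Rint_le0 {R : realType} {d} {T : measurableType d} (mu : {measure set T -> \bar R})
  (f : T -> R) : (forall x, f x <= 0) -> \int[mu]_x f x <= 0.
Proof.
move=> f0; rewrite /Rintegral; apply: fine_le0.
have -> : (\int[mu]_x (f x)%:E = - \int[mu]_x (- f x)%:E)%E.
  rewrite -(integral_ge0N mu); last by move=> x _; rewrite lee_fin oppr_ge0.
  by apply: eq_integral => x _; rewrite EFinN oppeK.
by rewrite oppe_le0 integral_ge0 // => x _; rewrite lee_fin oppr_ge0.
Qed.
Theorem lemma3p2 (R : realType) (d : measure_display) (O : measurableType d)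
  (P : probability O R) (xi : time R -> O -> R)
  (c : time R -> R) (Sig : time R -> time R -> R)
  (Q : {measure set (pathSpace R) -> \bar R}) :
  is_process xi -> stoch_continuous P xi -> time_stable P xi ->
  sigma_finite setT Q -> levy_rep P xi c Sig Q -> levy_minimal Q ->
  Q [set f : pathSpace R | sval f (time0 R) <> 0] = 0%E.
Proof.
move=> hproc _ tst _ [_ [psd [Qint rep]]] _.
have [dd [OO [PP [xs [[xproc [xsame xind]] sfdd]]]]] := tst 2%N isT.
set t0 := time0 R.
pose Y := xi t0.
pose X1 := xs ord0 t0.
pose X2 := xs ord_max t0.
have mY : measurable_fun setT Y := hproc t0.
have mX1 : measurable_fun setT X1 := xproc _ t0.
have mX2 : measurable_fun setT X2 := xproc _ t0.
have mX12 : measurable_fun setT (fun w => X1 w + X2 w) by apply: measurable_funD.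
have lawi i A : measurable A -> PP (xs i t0 @^-1` A) = P (Y @^-1` A).
  move=> mA; have := xsame i 1%N (fun=> t0) (fun=> A) (fun=> mA).
  by rewrite !setI1.
have law12 A : measurable A -> PP ((fun w => X1 w + X2 w) @^-1` A) = P (Y @^-1` A).
  move=> mA; have := sfdd 1%N (fun=> t0) (fun=> A) (fun=> mA).
  by rewrite !setI1 tscale0 => <-; congr (PP _); apply/seteqP; split => w /=;
    rewrite sum2.
have ind A B : measurable A -> measurable B ->
    PP (X1 @^-1` A `&` X2 @^-1` B) = (PP (X1 @^-1` A) * PP (X2 @^-1` B))%E.
  move=> mA mB.
  have := xind 1%N (fun=> t0) (fun i _ => if (i : nat) == 0%N then A else B)
    (fun i _ => if (i : nat) == 0%N as b return measurable (if b then A else B) then mA else mB).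
  rewrite prod2 /= !setI1.
  have E : [set w | forall (i : 'I_2), 'I_1 -> (if (i : nat) == 0%N then A else B) (xs i t0 w)]
      = X1 @^-1` A `&` X2 @^-1` B.
    apply/seteqP; split => w /=.
      by move=> h; split; [exact: (h ord0 ord0) | exact: (h ord_max ord0)].
    move=> [hA hB] i _; case: i => [[|[|k]] Hi] //=.
      by rewrite (_ : Ordinal Hi = ord0) //; apply: val_inj.
    by rewrite (_ : Ordinal Hi = ord_max) //; apply: val_inj.
  rewrite E => h.
  have m1A : measurable (X1 @^-1` A) by rewrite -[X in measurable X]setTI; apply: mX1.
  have m2B : measurable (X2 @^-1` B) by rewrite -[X in measurable X]setTI; apply: mX2.
  rewrite (prob_fin PP _ (measurableI _ _ m1A m2B)) h EFinM.
  by congr (_ * _)%E; [exact: esym (prob_fin PP _ m1A) | exact: esym (prob_fin PP _ m2B)].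
pose C th := \int[P]_w cos (th * Y w).
pose S th := \int[P]_w sin (th * Y w).
have mcf th : measurable_fun setT (fun x : R => cos (th * x)).
  by apply: measurableT_comp; [exact: mcos| apply: measurable_funM].
have msf th : measurable_fun setT (fun x : R => sin (th * x)).
  by apply: measurableT_comp; [exact: msin| apply: measurable_funM].
have c1 th : \int[PP]_w cos (th * X1 w) = C th :=
  Rint_law PP P _ _ mX1 mY (lawi ord0) _ 1 (mcf th) (fun x => cos_max _).
have c2 th : \int[PP]_w cos (th * X2 w) = C th :=
  Rint_law PP P _ _ mX2 mY (lawi ord_max) _ 1 (mcf th) (fun x => cos_max _).
have s1 th : \int[PP]_w sin (th * X1 w) = S th :=
  Rint_law PP P _ _ mX1 mY (lawi ord0) _ 1 (msf th) (fun x => sin_max _).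
have s2 th : \int[PP]_w sin (th * X2 w) = S th :=
  Rint_law PP P _ _ mX2 mY (lawi ord_max) _ 1 (msf th) (fun x => sin_max _).
have eC th : C th = C th * C th - S th * S th.
  have e12 : \int[PP]_w cos (th * (X1 w + X2 w)) = C th :=
    Rint_law PP P _ _ mX12 mY law12 _ 1 (mcf th) (fun x => cos_max _).
  by rewrite -{1}e12 (indep_cos PP X1 X2 mX1 mX2 ind th) c1 c2 s1 s2.
have eS th : S th = S th * C th + C th * S th.
  have e12 : \int[PP]_w sin (th * (X1 w + X2 w)) = S th :=
    Rint_law PP P _ _ mX12 mY law12 _ 1 (msf th) (fun x => sin_max _).
  by rewrite -{1}e12 (indep_sin PP X1 X2 mX1 mX2 ind th) c1 c2 s1 s2.
have key th : \int[Q]_f (cos (\sum_(j < 1) th * sval f t0) - 1) = 0.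
  have := rep 1%N (fun=> t0) (fun=> th); move=> /= [hc hs].
  have eC' : (\int[P]_w (cos (\sum_(j < 1) th * xi t0 w))%:E = (C th)%:E)%E.
    rewrite -(RintE P _ 1 (measurableT_comp (mcf th) mY) (fun _ => cos_max _)).
    by apply: eq_integral => w _; rewrite big_ord1.
  have eS' : (\int[P]_w (sin (\sum_(j < 1) th * xi t0 w))%:E = (S th)%:E)%E.
    rewrite -(RintE P _ 1 (measurableT_comp (msf th) mY) (fun _ => sin_max _)).
    by apply: eq_integral => w _; rewrite big_ord1.
  have hc1 := EFin_inj (etrans (esym eC') hc).
  have hs1 := EFin_inj (etrans (esym eS') hs).
  clear hc hs.
  have q0 : \int[Q]_f (cos (\sum_(j < 1) th * sval f t0) - 1) <= 0.
    by apply: Rint_le0 => f; rewrite subr_le0 cos_le1.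
  have s0 := psd 1%N (fun=> t0) (fun=> th).
  move: hc1 hs1 q0 s0.
  set q := \int[Q]_f (cos (\sum_(j < 1) th * sval f t0) - 1).
  set s := \sum_(j < 1) \sum_(l < 1) _.
  move=> hc hs q0 s0.
  have A0 : - s / 2 + q <= 0 by lra.
  have := alg _ _ _ _ (eC th) (eS th) hc hs A0.
  lra.
apply: (Q_lemma Q t0 (Qint t0)) => m.
transitivity (\int[Q]_f (cos (\sum_(j < 1) m.+1%:R^-1 * sval f t0) - 1)).
  by apply: eq_Rintegral => f _; rewrite big_ord1.
exact: key.
Qed.
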